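(* Let $D=\{(x,y)\in\mathbb{R}^2 \mid x+y\neq 1\}$ and $f(x,y)=(x+y)e^{-x}$. The 3-web on $D$ formed by the three foliations whose leaves are the level curves $x=\text{const}$, $y=\text{const}$ and $f(x,y)=\text{const}$ is linearizable: near every point of $D$ there is a local diffeomorphism onto an open subset of $\mathbb{R}^2$ carrying the leaves of all three foliations onto (open pieces of) straight lines.
   Context: A 3-web on a 2-dimensional manifold is given by three foliations by smooth curves in general position (pairwise transversal). A 3-web is linear if all three foliations consist of straight lines; it is linearizable if it is locally equivalent to a linear web via a local diffeomorphism. *)

(* Defs.v *)
From Stdlib Require Import Reals.
Open Scope R_scope.

Definition R2 := (R * R)%type.

(* Open subsets of R^2 (product / max-norm topology = Euclidean topology). *)
Definition open2 (U : R2 -> Prop) : Prop :=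
  forall p, U p -> exists r, 0 < r /\
    forall q, Rabs (fst q - fst p) < r -> Rabs (snd q - snd p) < r -> U q.

Definition cont_on (U : R2 -> Prop) (g : R2 -> R) : Prop :=
  forall p, U p -> forall eps, 0 < eps -> exists delta, 0 < delta /\
    forall q, U q -> Rabs (fst q - fst p) < delta -> Rabs (snd q - snd p) < delta ->
      Rabs (g q - g p) < eps.

Fixpoint Ck (k : nat) (U : R2 -> Prop) (g : R2 -> R) : Prop :=
  match k with
  | O => cont_on U g
  | S k' => cont_on U g /\
      exists g1 g2 : R2 -> R,
        (forall p, U p ->
           derivable_pt_lim (fun t => g (t, snd p)) (fst p) (g1 p) /\
           derivable_pt_lim (fun t => g (fst p, t)) (snd p) (g2 p)) /\
        Ck k' U g1 /\ Ck k' U g2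
  end.

Definition smooth_on (U : R2 -> Prop) (g : R2 -> R) : Prop := forall k, Ck k U g.

Definition smooth_map_on (U : R2 -> Prop) (F : R2 -> R2) : Prop :=
  smooth_on U (fun p => fst (F p)) /\ smooth_on U (fun p => snd (F p)).

Definition diffeo (U V : R2 -> Prop) (phi psi : R2 -> R2) : Prop :=
  open2 U /\ open2 V /\
  (forall p, U p -> V (phi p)) /\ (forall q, V q -> U (psi q)) /\
  (forall p, U p -> psi (phi p) = p) /\ (forall q, V q -> phi (psi q) = q) /\
  smooth_map_on U phi /\ smooth_map_on V psi.

Definition on_a_line (S : R2 -> Prop) : Prop :=
  exists a b c, (a <> 0 \/ b <> 0) /\
    forall q, S q -> a * fst q + b * snd q = c.

Definition D (p : R2) : Prop := fst p + snd p <> 1.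
Definition f (p : R2) : R := (fst p + snd p) * exp (- fst p).

(* The three first integrals of the web: leaves are level curves of these. *)
Definition web_integrals : list (R2 -> R) := (fun p => fst p) :: (fun p => snd p) :: f :: nil.

Definition linearizable_near (p0 : R2) : Prop :=
  exists (U V : R2 -> Prop) (phi psi : R2 -> R2),
    U p0 /\ (forall p, U p -> D p) /\ diffeo U V phi psi /\
    forall g, List.In g web_integrals -> forall c,
      on_a_line (fun q => exists p, U p /\ g p = c /\ q = phi p).

(* Main.v *)
From Stdlib Require Import Reals Lra FunctionalExtensionality.
From Stdlib Require Import Ranalysis5 MVT.
From Coquelicot Require Import Coquelicot.
Require Import Defs.
From Stdlib Require Import Reals.
Open Scope R_scope.
Definition cat (U : R2 -> Prop) (g : R2 -> R) (p : R2) : Prop :=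
  forall eps, 0 < eps -> exists delta, 0 < delta /\
    forall q, U q -> Rabs (fst q - fst p) < delta -> Rabs (snd q - snd p) < delta ->
      Rabs (g q - g p) < eps.

Lemma cat_add U g h p : cat U g p -> cat U h p -> cat U (fun q => g q + h q) p.
Proof.
  intros Hg Hh eps He.
  destruct (Hg (eps/2)) as [d1 [Hd1 H1]]; [lra|].
  destruct (Hh (eps/2)) as [d2 [Hd2 H2]]; [lra|].
  exists (Rmin d1 d2); split; [apply Rmin_pos; lra|].
  intros q Uq Hx Hy.
  assert (A1 := H1 q Uq (Rlt_le_trans _ _ _ Hx (Rmin_l _ _)) (Rlt_le_trans _ _ _ Hy (Rmin_l _ _))).
  assert (A2 := H2 q Uq (Rlt_le_trans _ _ _ Hx (Rmin_r _ _)) (Rlt_le_trans _ _ _ Hy (Rmin_r _ _))).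
  replace (g q + h q - (g p + h p)) with ((g q - g p) + (h q - h p)) by ring.
  eapply Rle_lt_trans; [apply Rabs_triang|]. lra.
Qed.

Lemma cont_pt_eps phi z : continuity_pt phi z -> forall eps, 0 < eps ->
  exists d, 0 < d /\ forall z', Rabs (z' - z) < d -> Rabs (phi z' - phi z) < eps.
Proof.
  intros H eps He. destruct (H eps He) as [d [Hd Hz]].
  exists d; split; [exact Hd|]. intros z' Hz'.
  destruct (Req_dec z z') as [E|E].
  - subst. rewrite Rminus_diag, Rabs_R0. exact He.
  - apply (Hz z'). split. split; [exact I| exact E]. exact Hz'.
Qed.

Lemma cat_comp U g p phi : cat U g p -> continuity_pt phi (g p) ->
  cat U (fun q => phi (g q)) p.
Proof.
  intros Hg Hphi eps He.
  destruct (cont_pt_eps _ _ Hphi eps He) as [d [Hd H1]].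
  destruct (Hg d Hd) as [d2 [Hd2 H2]].
  exists d2; split; [exact Hd2|]. intros q Uq Hx Hy. apply H1. apply H2; assumption.
Qed.

Lemma cat_cst U c p : cat U (fun _ => c) p.
Proof. intros eps He. exists 1; split; [lra|]. intros. rewrite Rminus_diag, Rabs_R0. exact He. Qed.

Lemma cat_fst U p : cat U (fun q => fst q) p.
Proof. intros eps He. exists eps; split; [exact He|]. intros; assumption. Qed.
Lemma cat_snd U p : cat U (fun q => snd q) p.
Proof. intros eps He. exists eps; split; [exact He|]. intros; assumption. Qed.

Lemma dcont phi z l : derivable_pt_lim phi z l -> continuity_pt phi z.
Proof. intro H. apply derivable_continuous_pt. exists l. exact H. Qed.

Lemma cat_mul U g h p : cat U g p -> cat U h p -> cat U (fun q => g q * h q) p.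
Proof.
  intros Hg Hh.
  assert (E : (fun q => g q * h q) =
    (fun q => (fun t => /4 * (t*t)) (g q + h q) + (fun t => - /4 * (t*t)) (g q + (fun t => -t) (h q)))).
  { apply functional_extensionality; intro q. field. }
  rewrite E. apply cat_add.
  - apply (cat_comp U (fun q => g q + h q) p (fun t => /4 * (t*t))). apply cat_add; assumption.
    eapply dcont. apply is_derive_Reals. auto_derive. auto. reflexivity.
  - apply (cat_comp U (fun q => g q + (fun t => -t) (h q)) p (fun t => - /4 * (t*t))).
    apply cat_add; [assumption|]. apply (cat_comp U h p (fun t => -t)); [assumption|].
    eapply dcont. apply is_derive_Reals. auto_derive. auto. reflexivity.
    eapply dcont. apply is_derive_Reals. auto_derive. auto. reflexivity.
Qed.

Section GenS.
Variable U : R2 -> Prop.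
Variable A : (R2 -> R) -> Prop.

Inductive Gen : (R2 -> R) -> Prop :=
| G_atom a : A a -> Gen a
| G_cst c : Gen (fun _ => c)
| G_add g h : Gen g -> Gen h -> Gen (fun p => g p + h p)
| G_mul g h : Gen g -> Gen h -> Gen (fun p => g p * h p).

Definition partials (g g1 g2 : R2 -> R) : Prop :=
  forall p, U p ->
    derivable_pt_lim (fun t => g (t, snd p)) (fst p) (g1 p) /\
    derivable_pt_lim (fun t => g (fst p, t)) (snd p) (g2 p).

Hypothesis HA : forall a, A a -> cont_on U a /\
  exists a1 a2, partials a a1 a2 /\ Gen a1 /\ Gen a2.

Lemma Gen_step g : Gen g -> cont_on U g /\ exists g1 g2, partials g g1 g2 /\ Gen g1 /\ Gen g2.
Proof.
  induction 1 as [a Ha|c|g h Gg [Cg [g1 [g2 [Pg [G1 G2]]]]] Gh [Ch [h1 [h2 [Ph [H1 H2]]]]]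
                 |g h Gg [Cg [g1 [g2 [Pg [G1 G2]]]]] Gh [Ch [h1 [h2 [Ph [H1 H2]]]]]].
  - apply HA; exact Ha.
  - split. intros p _. apply cat_cst.
    exists (fun _ => 0), (fun _ => 0). split; [|split; apply G_cst].
    intros p _; split; apply derivable_pt_lim_const.
  - split. intros p Up. apply cat_add; [exact (Cg p Up)|exact (Ch p Up)].
    exists (fun p => g1 p + h1 p), (fun p => g2 p + h2 p).
    split; [|split; apply G_add; assumption].
    intros p Up. destruct (Pg p Up) as [A1 A2]. destruct (Ph p Up) as [B1 B2].
    split.
    + exact (derivable_pt_lim_plus _ _ _ _ _ A1 B1).
    + exact (derivable_pt_lim_plus _ _ _ _ _ A2 B2).
  - split. intros p Up. apply cat_mul; [exact (Cg p Up)|exact (Ch p Up)].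
    exists (fun p => g1 p * h p + g p * h1 p), (fun p => g2 p * h p + g p * h2 p).
    split; [|split; apply G_add; apply G_mul; assumption].
    intros p Up. destruct (Pg p Up) as [A1 A2]. destruct (Ph p Up) as [B1 B2].
    destruct p as [x y]; simpl in *.
    split.
    + exact (derivable_pt_lim_mult _ _ _ _ _ A1 B1).
    + exact (derivable_pt_lim_mult _ _ _ _ _ A2 B2).
Qed.

Lemma Gen_Ck k : forall g, Gen g -> Ck k U g.
Proof.
  induction k as [|k IH]; intros g Gg; destruct (Gen_step g Gg) as [C [g1 [g2 [P [G1 G2]]]]].
  - exact C.
  - simpl. split; [exact C|]. exists g1, g2. split; [exact P|]. split; apply IH; assumption.
Qed.

Lemma Gen_smooth g : Gen g -> smooth_on U g.
Proof. intros Gg k. apply Gen_Ck; exact Gg. Qed.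

End GenS.

Lemma dlim_eq f x l l' : derivable_pt_lim f x l -> l = l' -> derivable_pt_lim f x l'.
Proof. intros H E; subst; exact H. Qed.

Lemma local_inverse s0 : s0 <> 1 -> exists a b sg lo hi (k : R -> R),
  a < s0 < b /\ (forall s, a < s < b -> s <> 1) /\
  (forall s, a < s < b -> lo < sg * (s * exp (-s)) < hi) /\
  (forall w, lo < sg * w < hi -> a < k w < b /\ k w * exp (- k w) = w) /\
  (forall s, a < s < b -> k (s * exp (-s)) = s) /\
  (forall w, lo < sg * w < hi -> continuity_pt k w /\
       derivable_pt_lim k w (exp (k w) / (1 - k w))).
Proof.
  intros Hs0.
  set (sg := if Rlt_dec s0 1 then 1 else -1).
  set (dl := Rabs (s0 - 1) / 2).
  assert (Hdl : 0 < dl).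
  { unfold dl. assert (0 < Rabs (s0 - 1)) by (apply Rabs_pos_lt; lra). lra. }
  assert (Hsg : sg * sg = 1) by (unfold sg; destruct (Rlt_dec s0 1); ring).
  assert (Hsg0 : sg <> 0) by (unfold sg; destruct (Rlt_dec s0 1); lra).
  assert (Hpos : forall t, s0 - 2*dl < t < s0 + 2*dl -> 0 < sg * (1 - t)).
  { intros t Ht. unfold dl in Ht. unfold sg. destruct (Rlt_dec s0 1).
    - rewrite Rabs_left in Ht by lra. lra.
    - rewrite Rabs_right in Ht by lra. lra. }
  set (a := s0 - dl). set (b := s0 + dl).
  assert (Hab : a < b) by (unfold a, b; lra).
  set (F := fun s => sg * (s * exp (-s))).
  set (F' := fun s => sg * ((1 - s) * exp (-s))).
  assert (HF : forall s, derivable_pt_lim F s (F' s)).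
  { intro s. apply is_derive_Reals. unfold F, F'. auto_derive. auto. ring. }
  set (derF := (fun s => exist _ (F' s) (HF s)) : derivable F).
  assert (HF'pos : forall t, a <= t <= b -> 0 < F' t).
  { intros t Ht. unfold F'. replace (sg * ((1 - t) * exp (- t))) with ((sg * (1 - t)) * exp (-t)) by ring.
    apply Rmult_lt_0_compat; [apply Hpos; unfold a, b in Ht; lra| apply exp_pos]. }
  assert (Hincr : forall x y, a <= x <= b -> a <= y <= b -> x < y -> F x < F y).
  { apply (derive_increasing_interv a b F derF Hab).
    intros t Ht. simpl. apply HF'pos; lra. }
  assert (Fcont : forall x, a <= x <= b -> continuity_pt F x).
  { intros x _. apply derivable_continuous_pt. exact (derF x). }
  assert (Hinj : forall x y, a <= x <= b -> a <= y <= b -> F x = F y -> x = y).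
  { intros x y Hx Hy E. destruct (Rtotal_order x y) as [L|[L|L]]; auto.
    - specialize (Hincr x y Hx Hy L). lra.
    - specialize (Hincr y x Hy Hx L). lra. }
  assert (Hex : forall y, {s | F a <= y <= F b -> a <= s <= b /\ F s = y}).
  { intro y. destruct (Rle_dec (F a) y) as [h1|h1]; [destruct (Rle_dec y (F b)) as [h2|h2]|].
    - destruct (f_interv_is_interv F a b y Hab (conj h1 h2) Fcont) as [s Hs].
      exists s. intros _. exact Hs.
    - exists a. intros; lra.
    - exists a. intros; lra. }
  set (Hinv := fun y => proj1_sig (Hex y)).
  assert (HinvP : forall y, F a <= y <= F b -> a <= Hinv y <= b /\ F (Hinv y) = y).
  { intros y Hy. unfold Hinv. destruct (Hex y) as [s Hs]. simpl. apply Hs; exact Hy. }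
  assert (Hinv_a : Hinv (F a) = a).
  { destruct (HinvP (F a)) as [H1 H2]. split; [lra| apply Rlt_le, Hincr; lra].
    apply Hinj; auto; lra. }
  assert (Hinv_b : Hinv (F b) = b).
  { destruct (HinvP (F b)) as [H1 H2]. split; [apply Rlt_le, Hincr; lra| lra].
    apply Hinj; auto; lra. }
  assert (HinvF : forall s, a <= s <= b -> Hinv (F s) = s).
  { intros s Hs. destruct (HinvP (F s)) as [H1 H2].
    split; [destruct (Req_dec a s) as [E|E]; [subst; lra| apply Rlt_le, Hincr; lra]
           |destruct (Req_dec s b) as [E|E]; [subst; lra| apply Rlt_le, Hincr; lra]].
    apply Hinj; auto. }
  set (k := fun w => Hinv (sg * w)).
  exists a, b, sg, (F a), (F b), k.
  split; [unfold a, b; lra|].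
  split.
  { intros s Hs E. subst s. assert (H := Hpos 1). unfold a, b in Hs. lra. }
  split.
  { intros s Hs. change (F a < F s < F b). split; apply Hincr; lra. }
  assert (Hk : forall w, F a < sg * w < F b -> a < k w < b /\ k w * exp (- k w) = w).
  { intros w Hw. unfold k. destruct (HinvP (sg * w)) as [H1 H2]; [lra|].
    split.
    - split.
      + destruct (Req_dec a (Hinv (sg * w))) as [E|E]; [|lra].
        rewrite <- E in H2. lra.
      + destruct (Req_dec (Hinv (sg * w)) b) as [E|E]; [|lra].
        rewrite E in H2. lra.
    - unfold F in H2. apply (Rmult_eq_reg_l sg); [|exact Hsg0]. exact H2. }
  split; [exact Hk|].
  split.
  { intros s Hs. unfold k. apply HinvF. lra. }
  intros w Hw. destruct (Hk w Hw) as [Hkw _].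
  assert (Hcont : continuity_pt Hinv (sg * w)).
  { apply (continuity_pt_recip_interv F Hinv a b Hab).
    - intros x y Hx Hxy Hy. apply Hincr; lra.
    - intros x H1 H2. unfold comp, id. apply HinvP; lra.
    - intros x H1 H2. apply HinvP; lra.
    - exact Fcont.
    - exact Hw. }
  assert (Hlin : derivable_pt_lim (fun w => sg * w) w sg).
  { apply is_derive_Reals. auto_derive. auto. ring. }
  split.
  - apply (continuity_pt_comp (fun w => sg * w) Hinv w); [|exact Hcont].
    apply derivable_continuous_pt. exists sg. exact Hlin.
  - assert (Hinc : Hinv (F a) <= Hinv (sg * w) <= Hinv (F b)).
    { rewrite Hinv_a, Hinv_b. unfold k in Hkw. lra. }
    assert (HD := derivable_pt_lim_recip_interv F Hinv (F a) (F b) (sg * w)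
       (fun c _ => derF c) Hcont ltac:(lra) Hw Hinc
       ltac:(intros x Hx; unfold comp, id; apply HinvP; lra)).
    simpl in HD.
    assert (Hne : F' (Hinv (sg * w)) <> 0).
    { apply Rgt_not_eq, HF'pos. unfold k in Hkw; lra. }
    specialize (HD Hne). idtac.
    assert (HC := derivable_pt_lim_comp (fun w => sg * w) Hinv w sg _ Hlin HD).
    apply (dlim_eq _ _ _ _ HC).
    fold (k w). unfold F'. rewrite exp_Ropp.
    assert (Hp1 : 0 < sg * (1 - k w)) by (apply Hpos; unfold a, b in Hkw; lra).
    assert (k w <> 1) by (intro E; rewrite E in Hp1; lra).
    assert (exp (k w) <> 0) by (apply Rgt_not_eq, exp_pos).
    field. split; [|split]; auto. lra.
Qed.

Lemma open_band g lo hi : (forall p, cat (fun _ => True) g p) -> open2 (fun p => lo < g p < hi).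
Proof.
  intros Hc p Hp. destruct (Hc p (Rmin (g p - lo) (hi - g p))) as [d [Hd H]].
  { apply Rmin_pos; lra. }
  exists d. split; [exact Hd|]. intros q Hx Hy. specialize (H q I Hx Hy).
  apply Rabs_def2 in H. assert (H1 := Rmin_l (g p - lo) (hi - g p)).
  assert (H2 := Rmin_r (g p - lo) (hi - g p)). lra.
Qed.

Lemma sl1 phi dphi (h : R2 -> R) h1 p :
  derivable_pt_lim (fun t => h (t, snd p)) (fst p) h1 ->
  derivable_pt_lim phi (h p) dphi ->
  derivable_pt_lim (fun t => phi (h (t, snd p))) (fst p) (dphi * h1).
Proof.
  intros H1 H2. destruct p as [x y]; simpl in *.
  exact (derivable_pt_lim_comp (fun t => h (t, y)) phi x h1 dphi H1 H2).
Qed.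

Lemma sl2 phi dphi (h : R2 -> R) h1 p :
  derivable_pt_lim (fun t => h (fst p, t)) (snd p) h1 ->
  derivable_pt_lim phi (h p) dphi ->
  derivable_pt_lim (fun t => phi (h (fst p, t))) (snd p) (dphi * h1).
Proof.
  intros H1 H2. destruct p as [x y]; simpl in *.
  exact (derivable_pt_lim_comp (fun t => h (x, t)) phi y h1 dphi H1 H2).
Qed.

Lemma dexpn x : derivable_pt_lim (fun t => exp (- t)) x (-1 * exp (- x)).
Proof. apply is_derive_Reals. auto_derive. auto. ring. Qed.

Lemma dinv1 z : z <> 1 -> derivable_pt_lim (fun z => 1 / (1 - z)) z (1 / (1 - z) * (1 / (1 - z))).
Proof. intro Hz. apply is_derive_Reals. auto_derive. lra. field. lra. Qed.

Lemma cat_expn U p : cat U (fun q => exp (- snd q)) p.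
Proof.
  apply (cat_comp U (fun q => snd q) p (fun t => exp (- t))). apply cat_snd.
  eapply dcont. apply dexpn.
Qed.

Lemma cat_w U p : cat U (fun q => fst q * exp (- snd q)) p.
Proof. apply (cat_mul U (fun q => fst q) (fun q => exp (- snd q))). apply cat_fst. apply cat_expn. Qed.

Definition wF (q : R2) := fst q * exp (- snd q).
Definition HF (k : R -> R) (q : R2) := k (wF q).
Definition E2F (k : R -> R) (q : R2) := exp (HF k q).
Definition QF (k : R -> R) (q : R2) := 1 / (1 - HF k q).
Definition dH1 (k : R -> R) (q : R2) := (E2F k q * QF k q) * exp (- snd q).
Definition dH2 (k : R -> R) (q : R2) := (E2F k q * QF k q) * (-1 * (fst q * exp (- snd q))).

Ltac dv := apply is_derive_Reals; try unfold wF; simpl; auto_derive; repeat split; try ring.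

Theorem mainTheorem1 : forall p0 : R2, D p0 -> linearizable_near p0.
Proof.
  intros [x0 y0] Hp0. unfold D in Hp0; simpl in Hp0.
  destruct (local_inverse (x0 + y0) Hp0) as [a [b [sg [lo [hi [k
    [Hab [Hn1 [Hg [Hk [Hkg Hkd]]]]]]]]]]].
  set (U := fun p : R2 => a < fst p + snd p < b).
  set (V := fun q : R2 => lo < sg * (fst q * exp (- snd q)) < hi).
  set (phi := fun p : R2 => (Defs.f p, snd p)).
  set (psi := fun q : R2 => (k (fst q * exp (- snd q)) - snd q, snd q)).
  assert (Hid : forall p : R2, Defs.f p * exp (- snd p) = (fst p + snd p) * exp (- (fst p + snd p))).
  { intros [x y]. unfold Defs.f; simpl. rewrite Ropp_plus_distr, exp_plus. ring. }
  assert (HkV : forall q, V q -> a < k (fst q * exp (- snd q)) < b /\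
            k (fst q * exp (- snd q)) * exp (- k (fst q * exp (- snd q))) = fst q * exp (- snd q)).
  { intros q Hq. apply Hk. exact Hq. }
  exists U, V, phi, psi.
  split; [unfold U; simpl; lra|].
  split; [intros p Hp; unfold D; apply Hn1; exact Hp|].
  split; [split; [|split; [|split; [|split; [|split; [|split; [|split]]]]]]|].
  - apply (open_band (fun p => fst p + snd p)). intro p.
    apply (cat_add _ (fun q => fst q) (fun q => snd q)); [apply cat_fst|apply cat_snd].
  - apply (open_band (fun q => sg * (fst q * exp (- snd q)))). intro p.
    apply (cat_mul _ (fun _ => sg) (fun q => fst q * exp (- snd q))); [apply cat_cst|apply cat_w].
  - intros p Hp. unfold V, phi; simpl. rewrite Hid. apply Hg. exact Hp.
  - intros q Hq. unfold U, psi; simpl. destruct (HkV q Hq) as [H1 _].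
    replace (k (fst q * exp (- snd q)) - snd q + snd q) with (k (fst q * exp (- snd q))) by ring.
    exact H1.
  - intros [x y] Hp. unfold psi, phi; simpl. assert (E := Hid (x, y)); simpl in E. rewrite E.
    rewrite Hkg by exact Hp. f_equal. ring.
  - intros [u v] Hq. unfold psi, phi, Defs.f; simpl.
    destruct (HkV (u, v) Hq) as [_ H2]; simpl in H2.
    f_equal.
    replace (k (u * exp (- v)) - v + v) with (k (u * exp (- v))) by ring.
    replace (- (k (u * exp (- v)) - v)) with (- k (u * exp (- v)) + v) by ring.
    rewrite exp_plus, <- Rmult_assoc, H2, Rmult_assoc, <- exp_plus.
    replace (- v + v) with 0 by ring. rewrite exp_0. ring.
  -
    set (AU := fun g : R2 -> R => g = (fun p => fst p) \/ g = (fun p => snd p) \/ g = (fun p => exp (- fst p))).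
    assert (HAU : forall g, AU g -> cont_on U g /\ exists g1 g2, partials U g g1 g2 /\ Gen AU g1 /\ Gen AU g2).
    { intros g [ -> | [ -> | -> ]].
      - split. intros p _; apply cat_fst.
        exists (fun _ => 1), (fun _ => 0). split; [|split; apply G_cst].
        intros p _; split; dv.
      - split. intros p _; apply cat_snd.
        exists (fun _ => 0), (fun _ => 1). split; [|split; apply G_cst].
        intros p _; split; dv.
      - split. intros p _. apply (cat_comp U (fun q => fst q) p (fun t => exp (- t))). apply cat_fst.
        eapply dcont. apply dexpn.
        exists (fun q => -1 * exp (- fst q)), (fun _ => 0). split.
        + intros p _; split; dv.
        + split; [|apply G_cst].
          apply (G_mul AU (fun _ => -1) (fun q => exp (- fst q))). apply G_cst.
          apply G_atom. right; right; reflexivity. }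
    split.
    + change (smooth_on U (fun p => (fst p + snd p) * exp (- fst p))).
      apply (Gen_smooth U AU HAU).
      apply (G_mul AU (fun p => fst p + snd p) (fun p => exp (- fst p))).
      apply (G_add AU (fun p => fst p) (fun p => snd p)); apply G_atom; unfold AU; auto.
      apply G_atom; unfold AU; auto.
    + apply (Gen_smooth U AU HAU). apply G_atom; unfold AU; auto.
  -
    set (AV := fun g : R2 -> R => g = (fun q => fst q) \/ g = (fun q => snd q) \/
       g = (fun q => exp (- snd q)) \/ g = HF k \/ g = E2F k \/ g = QF k).
    assert (Hne : forall p, V p -> 1 - HF k p <> 0).
    { intros p Hp. destruct (HkV p Hp) as [Hr _]. assert (HF k p <> 1) by (apply Hn1; exact Hr). lra. }
    assert (HH1 : forall p, V p -> derivable_pt_lim (fun t => HF k (t, snd p)) (fst p) (dH1 k p)).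
    { intros p Hp. destruct (Hkd _ Hp) as [_ Hd]. assert (N := Hne p Hp).
      apply (dlim_eq _ _ _ _ (sl1 k _ wF (exp (- snd p)) p ltac:(dv) Hd)).
      unfold dH1, E2F, QF, HF, wF. unfold HF, wF in N. field. exact N. }
    assert (HH2 : forall p, V p -> derivable_pt_lim (fun t => HF k (fst p, t)) (snd p) (dH2 k p)).
    { intros p Hp. destruct (Hkd _ Hp) as [_ Hd]. assert (N := Hne p Hp).
      apply (dlim_eq _ _ _ _ (sl2 k _ wF (fst p * (-1 * exp (- snd p))) p ltac:(dv) Hd)).
      unfold dH2, E2F, QF, HF, wF. unfold HF, wF in N. field. exact N. }
    assert (CH : forall p, V p -> cat V (HF k) p).
    { intros p Hp. apply (cat_comp V wF p k (cat_w V p)). apply Hkd; exact Hp. }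
    assert (GE2 : Gen AV (E2F k)) by (apply G_atom; unfold AV; tauto).
    assert (GQ : Gen AV (QF k)) by (apply G_atom; unfold AV; tauto).
    assert (GE1 : Gen AV (fun q => exp (- snd q))) by (apply G_atom; unfold AV; tauto).
    assert (GK : Gen AV (fun q => E2F k q * QF k q)) by (apply (G_mul AV (E2F k) (QF k)); assumption).
    assert (GD1 : Gen AV (dH1 k)).
    { apply (G_mul AV (fun q => E2F k q * QF k q) (fun q => exp (- snd q))); assumption. }
    assert (GD2 : Gen AV (dH2 k)).
    { apply (G_mul AV (fun q => E2F k q * QF k q) (fun q => -1 * (fst q * exp (- snd q)))); [assumption|].
      apply (G_mul AV (fun _ => -1) (fun q => fst q * exp (- snd q))); [apply G_cst|].
      apply (G_mul AV (fun q => fst q) (fun q => exp (- snd q))); [|assumption].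
      apply G_atom; unfold AV; tauto. }
    assert (HAV : forall g, AV g -> cont_on V g /\ exists g1 g2, partials V g g1 g2 /\ Gen AV g1 /\ Gen AV g2).
    { intros g [->|[->|[->|[ -> | [ -> | -> ]]]]].
      - split. intros p _; apply cat_fst.
        exists (fun _ => 1), (fun _ => 0). split; [|split; apply G_cst].
        intros p _; split; dv.
      - split. intros p _; apply cat_snd.
        exists (fun _ => 0), (fun _ => 1). split; [|split; apply G_cst].
        intros p _; split; dv.
      - split. intros p _. apply cat_expn.
        exists (fun _ => 0), (fun q => -1 * exp (- snd q)). split.
        + intros p _; split; dv.
        + split; [apply G_cst|].
          apply (G_mul AV (fun _ => -1) (fun q => exp (- snd q))). apply G_cst. exact GE1.
      - split. exact CH.
        exists (dH1 k), (dH2 k). split; [|split; assumption].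
        intros p Hp; split; [apply HH1|apply HH2]; exact Hp.
      - split. intros p Hp. apply (cat_comp V (HF k) p exp (CH p Hp)).
        eapply dcont. apply derivable_pt_lim_exp.
        exists (fun q => E2F k q * dH1 k q), (fun q => E2F k q * dH2 k q).
        split; [|split; apply (G_mul AV (E2F k)); assumption].
        intros p Hp; split.
        + exact (sl1 exp _ (HF k) _ p (HH1 p Hp) (derivable_pt_lim_exp _)).
        + exact (sl2 exp _ (HF k) _ p (HH2 p Hp) (derivable_pt_lim_exp _)).
      - split. intros p Hp. apply (cat_comp V (HF k) p (fun z => 1 / (1 - z)) (CH p Hp)).
        eapply dcont. apply dinv1. assert (N := Hne p Hp). lra.
        exists (fun q => (QF k q * QF k q) * dH1 k q), (fun q => (QF k q * QF k q) * dH2 k q).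
        split; [|split; apply (G_mul AV (fun q => QF k q * QF k q)); try assumption;
                     apply (G_mul AV (QF k) (QF k)); assumption].
        intros p Hp; assert (N := Hne p Hp). split.
        + exact (sl1 (fun z => 1 / (1 - z)) _ (HF k) _ p (HH1 p Hp) (dinv1 (HF k p) ltac:(lra))).
        + exact (sl2 (fun z => 1 / (1 - z)) _ (HF k) _ p (HH2 p Hp) (dinv1 (HF k p) ltac:(lra))). }
    split.
    + assert (E : (fun q => fst (psi q)) = (fun q => HF k q + (-1) * snd q)).
      { apply functional_extensionality; intro q. unfold psi, HF, wF; simpl. ring. }
      rewrite E. apply (Gen_smooth V AV HAV).
      apply (G_add AV (HF k) (fun q => -1 * snd q)). apply G_atom; unfold AV; tauto.
      apply (G_mul AV (fun _ => -1) (fun q => snd q)). apply G_cst. apply G_atom; unfold AV; tauto.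
    + apply (Gen_smooth V AV HAV). apply G_atom; unfold AV; tauto.
  - intros g Hin c. simpl in Hin. destruct Hin as [<-|[<-|[<-|[]]]].
    + exists 1, (- exp (- c)), (c * exp (- c)). split; [left; lra|].
      intros q [p [Up [Hc ->]]]. unfold phi, Defs.f; simpl. simpl in Hc. rewrite Hc. ring.
    + exists 0, 1, c. split; [right; lra|].
      intros q [p [Up [Hc ->]]]. unfold phi; simpl. simpl in Hc. rewrite Hc. ring.
    + exists 1, 0, c. split; [left; lra|].
      intros q [p [Up [Hc ->]]]. unfold phi; simpl. rewrite Hc. ring.
Qed.
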